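(* For all real $\alpha$ and all real $h$ (and any $T>2\pi$), $F_h(\alpha)\le F(\alpha)$.
   Context: Let $L=\log\frac{T}{2\pi}$. Sums $\sum_{0<\gamma,\gamma'\le T}$ run over pairs of ordinates $\gamma,\gamma'$ of nontrivial zeros of the Riemann zeta function (counted with multiplicity) with $0<\gamma,\gamma'\le T$. Let $w(u)=\frac{4}{4+u^2}$ and, for real $h$ and $x\ge1$, $$F_h(x,T)=\sum_{0<\gamma,\gamma'\le T}\cos\bigl((\gamma-\gamma'-h)\log x\bigr)\,w(\gamma-\gamma'-h).$$ For $\alpha\ge0$ set $F_h(\alpha)=\bigl(\frac{TL}{2\pi}\bigr)^{-1}F_h\bigl((\tfrac{T}{2\pi})^{\alpha},T\bigr)$, and $F_h(-\alpha)=F_h(\alpha)$; write $F(\alpha)=F_0(\alpha)$. *)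

(* Defs.v *)
From Stdlib Require Import Reals List.
From Coquelicot Require Import Coquelicot.
Open Scope R_scope.

(* n^{-s} = exp(-s log n) for a positive integer n and complex s *)
Definition npow_neg (n : nat) (s : Complex.C) : Complex.C :=
  (exp (- Re s * ln (INR n)) * cos (Im s * ln (INR n)),
   - (exp (- Re s * ln (INR n)) * sin (Im s * ln (INR n)))).

(* Dirichlet eta function eta(s) = sum_{k>=0} (-1)^k (k+1)^{-s},
   convergent (conditionally) for Re s > 0; real and imaginary parts summed. *)
Definition eta_term (s : Complex.C) (k : nat) : Complex.C :=
  Cmult (RtoC ((-1) ^ k)) (npow_neg (S k) s).

Definition eta (s : Complex.C) : Complex.C :=
  (Series (fun k => Re (eta_term s k)), Series (fun k => Im (eta_term s k))).

(* Riemann zeta in the half-plane Re s > 0 (analytic continuation):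
   zeta(s) = eta(s) / (1 - 2^{1-s}); valid at every s with Re s > 0 where
   1 - 2^{1-s} <> 0, in particular in the whole open critical strip. *)
Definition zeta (s : Complex.C) : Complex.C :=
  Cdiv (eta s) (Cminus (RtoC 1) (Cmult (RtoC 2) (npow_neg 2 s))).

Definition zeta_zero_mult (rho : Complex.C) (m : nat) : Prop :=
  exists l : Complex.C, l <> RtoC 0 /\
    filterlim (fun s => Cdiv (zeta s) (pow_n (Cminus s rho) m))
              (locally' rho) (locally l).

Definition nontriv_zero_upto (T : R) (rho : Complex.C) : Prop :=
  0 < Re rho < 1 /\ 0 < Im rho <= T /\ zeta rho = RtoC 0.

Definition count_C (rho : Complex.C) (L : list Complex.C) : nat :=
  length (filter (fun z => if Req_dec_T (Re z) (Re rho) then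
                             if Req_dec_T (Im z) (Im rho) then true else false
                           else false) L).

Definition zeros_list_upto (T : R) (L : list Complex.C) : Prop :=
  (forall rho, In rho L -> nontriv_zero_upto T rho) /\
  (forall rho m, nontriv_zero_upto T rho -> zeta_zero_mult rho m ->
     count_C rho L = m).

Definition w (u : R) : R := 4 / (4 + u ^ 2).

Definition F_sum (L : list Complex.C) (h x : R) : R :=
  fold_right Rplus 0
    (map (fun g => fold_right Rplus 0
       (map (fun g' => cos ((Im g - Im g' - h) * ln x) * w (Im g - Im g' - h)) L)) L).

(* normalized F_h(alpha), extended evenly to alpha < 0 *)
Definition F_alpha (L : list Complex.C) (T h alpha : R) : R :=
  / (T * ln (T / (2 * PI)) / (2 * PI)) *
  F_sum L h (Rpower (T / (2 * PI)) (Rabs alpha)).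

(* Main.v *)
Require Import Defs.
From Stdlib Require Import Reals List Lra.
From Coquelicot Require Import Coquelicot.
Open Scope R_scope.

Definition S (l : list Complex.C) (f : Complex.C -> R) : R := fold_right Rplus 0 (map f l).

Lemma S_ext l f g : (forall x, f x = g x) -> S l f = S l g.
Proof. intro H; induction l as [|x l IH]; simpl; [reflexivity|]. unfold S in *; simpl; rewrite H, IH; reflexivity. Qed.

Lemma S_lin2 l a b p q : S l (fun y => a * p y + b * q y) = a * S l p + b * S l q.
Proof. induction l as [|x l IH]; unfold S in *; simpl; [ring|]. rewrite IH; ring. Qed.

Lemma S_le l f g : (forall x, f x <= g x) -> S l f <= S l g.
Proof. intro H; induction l as [|x l IH]; unfold S in *; simpl; [lra|]. specialize (H x); lra. Qed.

Lemma S_const l c : S l (fun _ => c) = INR (length l) * c.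
Proof. induction l as [|x l IH]; unfold S in *; simpl length; [simpl; ring|]. rewrite S_INR; simpl; rewrite IH; ring. Qed.

Lemma is_derive_S l (f f' : Complex.C -> R -> R) t :
  (forall x, is_derive (f x) t (f' x t)) ->
  is_derive (fun t => S l (fun x => f x t)) t (S l (fun x => f' x t)).
Proof.
  intro H; induction l as [|x l IH]; unfold S in *; simpl.
  - auto_derive; auto.
  - apply (is_derive_plus (fun t => f x t) (fun t => fold_right Rplus 0 (map (fun x0 => f x0 t) l))); auto.
Qed.

Definition DS l (f : Complex.C -> Complex.C -> R) := S l (fun x => S l (fun y => f x y)).

Lemma DS_ext l f g : (forall x y, f x y = g x y) -> DS l f = DS l g.
Proof. intro H; unfold DS; apply S_ext; intro; apply S_ext; auto. Qed.

Lemma DS_lin2 l a b f g : DS l (fun x y => a * f x y + b * g x y) = a * DS l f + b * DS l g.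
Proof. unfold DS. rewrite <- S_lin2. apply S_ext; intro; apply S_lin2. Qed.

Lemma DS_le l f g : (forall x y, f x y <= g x y) -> DS l f <= DS l g.
Proof. intro H; unfold DS; apply S_le; intro; apply S_le; auto. Qed.

Lemma DS_const l c : DS l (fun _ _ => c) = INR (length l) * (INR (length l) * c).
Proof. unfold DS. rewrite (S_ext _ _ (fun _ => INR (length l) * c)). apply S_const. intro; apply S_const. Qed.

Lemma is_derive_DS l (f f' : Complex.C -> Complex.C -> R -> R) t :
  (forall x y, is_derive (f x y) t (f' x y t)) ->
  is_derive (fun t => DS l (fun x y => f x y t)) t (DS l (fun x y => f' x y t)).
Proof.
  intro H; unfold DS. apply (is_derive_S l (fun x t => S l (fun y => f x y t)) (fun x t => S l (fun y => f' x y t))).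
  intro x; apply (is_derive_S l (fun y t => f x y t)); auto.
Qed.

Lemma DS_cos_le l (v : Complex.C -> R) c :
  DS l (fun x y => cos (v x - v y - c)) <= DS l (fun x y => cos (v x - v y)).
Proof.
  set (P := S l (fun x => cos (v x))). set (Q := S l (fun x => sin (v x))).
  assert (E : forall al be, DS l (fun x y => al * cos (v x - v y) + be * sin (v x - v y)) = al * (P*P+Q*Q)).
  { intros al be. unfold DS.
    rewrite (S_ext _ _ (fun x => (al * P - be * Q) * cos (v x) + (be * P + al * Q) * sin (v x))).
    - rewrite S_lin2. fold P Q. ring.
    - intro x. rewrite (S_ext _ _ (fun y => (al * cos (v x) + be * sin (v x)) * cos (v y) + (al * sin (v x) - be * cos (v x)) * sin (v y))).
      + rewrite S_lin2. fold P Q. ring.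
      + intro y. rewrite cos_minus, sin_minus. ring. }
  rewrite (DS_ext _ _ (fun x y => cos c * cos (v x - v y) + sin c * sin (v x - v y))).
  2:{ intros x y. replace (v x - v y - c) with ((v x - v y) - c) by ring. rewrite cos_minus. ring. }
  rewrite (DS_ext _ (fun x y => cos (v x - v y)) (fun x y => 1 * cos (v x - v y) + 0 * sin (v x - v y))).
  2:{ intros; ring. }
  rewrite !E. pose proof (COS_bound c). nra.
Qed.
Definition phi a u t := exp (-2*t) * (u*sin(u*(a+t)) - 2*cos(u*(a+t)) - u*sin(u*(a-t)) - 2*cos(u*(a-t))) / (4+u^2).

Lemma pos4 u : 0 < 4 + u^2. Proof. nra. Qed.

Lemma phi_deriv a u t : is_derive (phi a u) t (exp(-2*t)*(cos(u*(a+t)) + cos(u*(a-t)))).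
Proof.
  unfold phi. pose proof (pos4 u). auto_derive.
  - lra.
  - replace (a + - t) with (a - t) by ring. field. lra.
Qed.

Lemma phi_0 a u : phi a u 0 = - (cos (u*a) * w u).
Proof.
  unfold phi, w. pose proof (pos4 u). replace (-2*0) with 0 by ring. rewrite exp_0.
  replace (a+0) with a by ring. replace (a-0) with a by ring. field. lra.
Qed.

Lemma phi_bound a u t : -(2*exp(-2*t)) <= phi a u t <= 2*exp(-2*t).
Proof.
  unfold phi. pose proof (pos4 u). pose proof (exp_pos (-2*t)).
  set (e := exp (-2*t)).
  pose proof (SIN_bound (u*(a+t))). pose proof (COS_bound (u*(a+t))).
  pose proof (SIN_bound (u*(a-t))). pose proof (COS_bound (u*(a-t))).
  set (s1 := sin (u*(a+t))) in *. set (c1 := cos (u*(a+t))) in *.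
  set (s2 := sin (u*(a-t))) in *. set (c2 := cos (u*(a-t))) in *.
  set (N := u*s1 - 2*c1 - u*s2 - 2*c2).
  assert (N <= 2*(4+u^2) /\ -N <= 2*(4+u^2)).
  { unfold N. assert (s1*s1 <= 1) by nra. assert (s2*s2 <= 1) by nra.
    pose proof (pow2_ge_0 (u-s1)). pose proof (pow2_ge_0 (u+s1)).
    pose proof (pow2_ge_0 (u-s2)). pose proof (pow2_ge_0 (u+s2)). split; nra. }
  fold N. fold e in H0.
  assert (E : e * N / (4+u^2) = e * (N / (4+u^2))) by (unfold Rdiv; ring). rewrite E.
  assert (N / (4+u^2) <= 2 /\ -2 <= N / (4+u^2)).
  { split.
    - apply Rmult_le_reg_r with (4+u^2); [lra|]. unfold Rdiv. rewrite Rmult_assoc, Rinv_l by lra. lra.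
    - apply Rmult_le_reg_r with (4+u^2); [lra|]. unfold Rdiv. rewrite Rmult_assoc, Rinv_l by lra. lra. }
  match goal with Hx : _ /\ _ |- _ => idtac end. split; nra.
Qed.

Lemma key l a h :
  DS l (fun g g' => cos ((Im g - Im g' - h) * a) * w (Im g - Im g' - h)) <=
  DS l (fun g g' => cos ((Im g - Im g' - 0) * a) * w (Im g - Im g' - 0)).
Proof.
  set (F0 := DS l (fun g g' => cos ((Im g - Im g' - 0) * a) * w (Im g - Im g' - 0))).
  set (Fh := DS l (fun g g' => cos ((Im g - Im g' - h) * a) * w (Im g - Im g' - h))).
  set (D := fun t => DS l (fun g g' => phi a (Im g - Im g' - 0) t) - DS l (fun g g' => phi a (Im g - Im g' - h) t)).
  set (dp := fun c g g' t => exp(-2*t)*(cos((Im g - Im g' - c)*(a+t)) + cos((Im g - Im g' - c)*(a-t)))).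
  set (D' := fun t => DS l (fun g g' => dp 0 g g' t) - DS l (fun g g' => dp h g g' t)).
  assert (Hneg : forall c, DS l (fun g g' => phi a (Im g - Im g' - c) 0) =
     - DS l (fun g g' => cos ((Im g - Im g' - c) * a) * w (Im g - Im g' - c))).
  { intro c. rewrite (DS_ext _ _ (fun g g' => (-1) * (cos ((Im g - Im g' - c) * a) * w (Im g - Im g' - c)) + 0 * (cos ((Im g - Im g' - c) * a) * w (Im g - Im g' - c)))).
    - rewrite DS_lin2. ring.
    - intros x y. rewrite phi_0. ring. }
  assert (HD0 : D 0 = Fh - F0). { unfold D. rewrite !Hneg. fold F0 Fh. ring. }
  assert (Hder : forall t, is_derive D t (D' t)).
  { intro t. unfold D, D'.
    apply (is_derive_minus (fun t => DS l (fun g g' => phi a (Im g - Im g' - 0) t))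
                           (fun t => DS l (fun g g' => phi a (Im g - Im g' - h) t))).
    - apply (is_derive_DS l (fun g g' t => phi a (Im g - Im g' - 0) t) (fun g g' t => dp 0 g g' t)).
      intros; apply phi_deriv.
    - apply (is_derive_DS l (fun g g' t => phi a (Im g - Im g' - h) t) (fun g g' t => dp h g g' t)).
      intros; apply phi_deriv. }
  assert (Hsplit : forall c t, DS l (fun g g' => dp c g g' t) =
      exp(-2*t) * DS l (fun g g' => cos (Im g * (a+t) - Im g' * (a+t) - c*(a+t)))
    + exp(-2*t) * DS l (fun g g' => cos (Im g * (a-t) - Im g' * (a-t) - c*(a-t)))).
  { intros c t. rewrite <- DS_lin2. apply DS_ext. intros x y. unfold dp.
    replace ((Im x - Im y - c) * (a + t)) with (Im x * (a+t) - Im y * (a+t) - c*(a+t)) by ring.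
    replace ((Im x - Im y - c) * (a - t)) with (Im x * (a-t) - Im y * (a-t) - c*(a-t)) by ring.
    ring. }
  assert (HD'pos : forall t, 0 <= D' t).
  { intro t. unfold D'. rewrite !Hsplit. pose proof (exp_pos (-2*t)).
    pose proof (DS_cos_le l (fun g => Im g * (a+t)) (h*(a+t))).
    pose proof (DS_cos_le l (fun g => Im g * (a-t)) (h*(a-t))).
    simpl in *.
    rewrite (DS_ext _ (fun g g' => cos (Im g * (a+t) - Im g' * (a+t) - 0*(a+t))) (fun g g' => cos (Im g * (a+t) - Im g' * (a+t)))) by (intros; f_equal; ring).
    rewrite (DS_ext _ (fun g g' => cos (Im g * (a-t) - Im g' * (a-t) - 0*(a-t))) (fun g g' => cos (Im g * (a-t) - Im g' * (a-t)))) by (intros; f_equal; ring).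
    nra. }
  assert (Hmono : forall t, 0 < t -> D 0 <= D t).
  { intros t Ht. destruct (MVT_gen D 0 t D') as [c [_ Hc]].
    - intros; apply Hder.
    - intros x _. apply derivable_continuous_pt. exists (D' x). apply is_derive_Reals. apply Hder.
    - specialize (HD'pos c). nra. }
  set (n := INR (length l)).
  assert (Hn : 0 <= n) by apply pos_INR.
  assert (Hbd : forall t, D t <= 4 * (n*n) * exp(-2*t)).
  { intro t. unfold D.
    pose proof (DS_le l (fun g g' => phi a (Im g - Im g' - 0) t) (fun _ _ => 2*exp(-2*t))
       (fun x y => proj2 (phi_bound a _ t))).
    pose proof (DS_le l (fun _ _ => -(2*exp(-2*t))) (fun g g' => phi a (Im g - Im g' - h) t)
       (fun x y => proj1 (phi_bound a _ t))).
    rewrite !DS_const in *. unfold n. nra. }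
  destruct (Rle_or_lt (Fh - F0) 0) as [Hle|Hgt]; [lra|exfalso].
  set (d := Fh - F0) in *.
  set (t := (4*(n*n)+1)/d).
  assert (Ht : 0 < t) by (unfold t; apply Rdiv_lt_0_compat; nra).
  pose proof (Hmono t Ht). pose proof (Hbd t). rewrite HD0 in *.
  pose proof (exp_ineq1 (2*t) ltac:(lra)).
  assert (E : exp (-2*t) * exp (2*t) = 1) by (rewrite <- exp_plus; replace (-2*t+2*t) with 0 by ring; apply exp_0).
  assert (Edt : d * t = 4*(n*n)+1) by (unfold t; field; lra).
  pose proof (exp_pos (-2*t)).
  assert (d * exp (2*t) <= 4*(n*n)) by nra.
  nra.
Qed.

Theorem lemma6p2 (T : R) (L : list Complex.C) :
  2 * PI < T -> zeros_list_upto T L ->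
  forall alpha h : R, F_alpha L T h alpha <= F_alpha L T 0 alpha.
Proof.
  intros HT _ alpha h. unfold F_alpha.
  pose proof PI_RGT_0 as Hpi.
  assert (H1 : 1 < T / (2*PI)).
  { apply (Rmult_lt_reg_r (2*PI)); [lra|]. unfold Rdiv. rewrite Rmult_assoc, Rinv_l by lra. lra. }
  assert (Hln : 0 < ln (T / (2*PI))) by (rewrite <- ln_1; apply ln_increasing; lra).
  apply Rmult_le_compat_l.
  - left. apply Rinv_0_lt_compat. apply Rdiv_lt_0_compat; [|lra]. apply Rmult_lt_0_compat; lra.
  - apply (key L).
Qed.
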